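(* Let $(\mathcal{G},S)$ be an instance of \textsc{Temporally Disjoint Walks} where $\mathcal{G}$ is a temporal line, and let $\mathcal{S}$ be a solution that minimizes the sum of the lengths of its walks among all solutions. Let $W\in\mathcal{S}$ be a temporal $(s,z)$-walk in which the transitions $(a,b,t),(b,a,t')$ with $t<t'$ are consecutive. Then there exists a temporal $(s',z')$-walk $W'\neq W$ in $\mathcal{S}$ such that $W'$ contains at least one of the transitions $(s',a',t'')$ or $(a',z',t'')$ for some vertex $a'$ and some $t''$ with $t<t''<t'$, where the distance between $a$ and $a'$ in the underlying path of $\mathcal{G}$ is at most $|S|$.
   Context: A temporal graph $\mathcal{G}=(V,E_1,\ldots,E_T)$ has vertex set $V$ and edge sets $E_1,\ldots,E_T\subseteq\binom{V}{2}$; it is a temporal line if its underlying graph $(V,\bigcup_i E_i)$ is a path. A temporal $(s,z)$-walk of length $k$ from $s=v_0$ to $z=v_k$ is a sequence of transitions $((v_{i-1},v_i,t_i))_{i=1}^k$ with $\{v_{i-1},v_i\}\in E_{t_i}$ and $t_1<\cdots<t_k$. It occupies $v_i$ during $[t_i,t_{i+1}]$ for $i\in[k-1]$, $v_0$ during $[t_1,t_1]$ and $v_k$ during $[t_k,t_k]$. Two temporal walks are temporally disjoint unless some vertex is occupied by both during intersecting time intervals. \textsc{Temporally Disjoint Walks} asks, given $\mathcal{G}$ and a multiset $S\subseteq V\times V$ of source-sink pairs, for pairwise temporally disjoint temporal $(s_i,z_i)$-walks, one for each $(s_i,z_i)\in S$; a solution $\mathcal{S}$ is such a family, and $|S|$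 is the number of source-sink pairs. *)

(* Defs.v *)
From mathcomp Require Import all_boot.
Set Implicit Arguments. Unset Strict Implicit. Unset Printing Implicit Defensive.

(* A temporal graph on vertex set V (a finType) with lifetime T is given by
   E : nat -> rel V; the edge set at time t (1 <= t <= T) is E t.  Values of E
   outside [1, T] are ignored everywhere. *)

Definition temporal_graph (V : finType) (T : nat) (E : nat -> rel V) : Prop :=
  forall t, 1 <= t <= T -> irreflexive (E t) /\ symmetric (E t).

Definition ug_edge (V : finType) (T : nat) (E : nat -> rel V) : rel V :=
  fun u v => has (fun t => E t u v) (iota 1 T).

Definition temporal_line (V : finType) (T : nat) (E : nat -> rel V) : Prop :=
  temporal_graph T E /\
  exists p : seq V, [/\ uniq p, forall v, v \in p &
    forall u v, ug_edge T E u v = ((u, v) \in zip p (behead p))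
                                  || ((v, u) \in zip p (behead p))].

Definition ug_dist_le (V : finType) (T : nat) (E : nat -> rel V)
  (u v : V) (k : nat) : Prop :=
  exists p : seq V, [/\ size p <= k, path (ug_edge T E) u p & last u p = v].

Definition trsrc (V : Type) (x : V * V * nat) : V := x.1.1.
Definition trdst (V : Type) (x : V * V * nat) : V := x.1.2.
Definition trtime (V : Type) (x : V * V * nat) : nat := x.2.

Definition is_twalk (V : finType) (T : nat) (E : nat -> rel V)
  (s z : V) (w : seq (V * V * nat)) : Prop :=
  (forall x, x \in w -> 1 <= trtime x <= T /\ E (trtime x) (trsrc x) (trdst x)) /\
  match w with
  | [::] => s = z
  | x :: w' => [/\ trsrc x = s, trdst (last x w') = z &
                 path (fun y y' => (trdst y == trsrc y') && (trtime y < trtime y')) x w']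
  end.

Definition occupies (V : Type) (w : seq (V * V * nat)) (v : V) (a b : nat) : Prop :=
  match w with
  | [::] => False
  | x0 :: _ =>
    let x i := nth x0 w i in
    let k := size w in
    [\/ v = trsrc (x 0) /\ a = trtime (x 0) /\ b = trtime (x 0),
        (exists i, i.+1 < k /\ v = trdst (x i) /\ a = trtime (x i) /\ b = trtime (x i.+1))
      | v = trdst (x k.-1) /\ a = trtime (x k.-1) /\ b = trtime (x k.-1)]
  end.

Definition tdisjoint (V : Type) (w1 w2 : seq (V * V * nat)) : Prop :=
  ~ exists v a b c d, [/\ occupies w1 v a b, occupies w2 v c d, a <= d & c <= b].

(* The multiset S of source-sink pairs is given as an indexed family
   S : 'I_n -> V * V (so |S| = n); a solution assigns to each index i a
   temporal (S i).1-(S i).2 walk, pairwise temporally disjoint. *)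
Definition is_solution (V : finType) (T : nat) (E : nat -> rel V) (n : nat)
  (S : 'I_n -> V * V) (sol : 'I_n -> seq (V * V * nat)) : Prop :=
  (forall i, is_twalk T E (S i).1 (S i).2 (sol i)) /\
  (forall i j, i != j -> tdisjoint (sol i) (sol j)).

(* Main.v *)
Require Import Defs.
From mathcomp Require Import all_boot zify.
From Stdlib Require Import Classical.
Set Implicit Arguments. Unset Strict Implicit. Unset Printing Implicit Defensive.

Definition pairs (A : Type) (s : seq A) := zip s (behead s).

Lemma pairs_cat (A : eqType) (a : A) s1 b s2 :
  pairs (a :: s1 ++ b :: s2) = pairs (a :: s1) ++ (last a s1, b) :: pairs (b :: s2).
Proof. by elim: s1 a => [|c s1 IH] a //=; rewrite -IH. Qed.

Lemma pairs_nth (A : eqType) (d : A) (s : seq A) x y :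
  (x, y) \in pairs s <-> exists i, i.+1 < size s /\ x = nth d s i /\ y = nth d s i.+1.
Proof.
elim: s => [|x0 s IH] /=; first by split => // -[i []].
case: s IH => [|x1 s] IH /=; first by split => // -[i [] ].
rewrite in_cons; split.
  case/orP => [/eqP [-> ->]|H]; first by exists 0.
  have [i [H1 [H2 H3]]] : exists i, i.+1 < size (x1 :: s) /\ x = nth d (x1::s) i /\ y = nth d (x1::s) i.+1.
    by apply/IH.
  by exists i.+1.
case=> [[|i]] [H1 [H2 H3]]; first by rewrite H2 H3 eqxx.
apply/orP; right; apply/IH; by exists i.
Qed.

Lemma pairs_split (A : eqType) (s : seq A) x y :
  (x, y) \in pairs s -> exists l1 l2, s = l1 ++ x :: y :: l2.
Proof.
elim: s => [|x0 s IH] //=; case: s IH => [|x1 s] IH //=.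
rewrite in_cons => /orP [/eqP [-> ->]|H]; first by exists [::], s.
have [l1 [l2 E]] := IH H; exists (x0 :: l1), l2; by rewrite /= E.
Qed.

Lemma pairs_mem1 (A : eqType) (s : seq A) x y : (x, y) \in pairs s -> x \in s.
Proof. by move/pairs_split => [l1 [l2 ->]]; rewrite mem_cat in_cons eqxx orbT. Qed.

Lemma pairs_mem2 (A : eqType) (x0 : A) (s : seq A) x y : (x, y) \in pairs (x0 :: s) -> y \in s.
Proof.
move/pairs_split => [[|z l1] [l2 /= [E1 E2]]]; subst; first by rewrite in_cons eqxx.
by rewrite mem_cat !in_cons eqxx !orbT.
Qed.

Lemma pmem_prev (A : eqType) (x0 : A) s x : x \in x0 :: s -> x = x0 \/ exists x', (x', x) \in pairs (x0 :: s).
Proof.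
elim: s x0 => [|x1 s IH] x0; first by rewrite in_cons in_nil orbF => /eqP; left.
rewrite in_cons => /orP [/eqP ->|H]; first by left.
right; case: (IH x1 H) => [->|[x' H']]; first by exists x0; rewrite /pairs /= in_cons eqxx.
by exists x'; rewrite /pairs /= in_cons H' orbT.
Qed.

Lemma pmem_next (A : eqType) (x0 : A) s x : x \in x0 :: s -> x = last x0 s \/ exists y, (x, y) \in pairs (x0 :: s).
Proof.
elim: s x0 => [|x1 s IH] x0; first by rewrite in_cons in_nil orbF => /eqP; left.
rewrite in_cons => /orP [/eqP ->|H].
  by right; exists x1; rewrite /pairs /= in_cons eqxx.
case: (IH x1 H) => [->|[y H']]; first by left.
by right; exists y; rewrite /pairs /= in_cons H' orbT.
Qed.

Lemma path_pairs (A : eqType) (r : rel A) x0 s x y : path r x0 s -> (x, y) \in pairs (x0 :: s) -> r x y.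
Proof.
elim: s x0 => [|x1 s IH] x0 //= /andP [H1 H2].
rewrite in_cons => /orP [/eqP [-> ->] //|]; exact: IH.
Qed.

Lemma pairs_uniq1 (A : eqType) (p : seq A) u w1 w2 : uniq p ->
  (u, w1) \in pairs p -> (u, w2) \in pairs p -> w1 = w2.
Proof.
elim: p => [|x0 p IH] //=; case: p IH => [|x1 p] IH //= /andP [Hn Hu].
rewrite !in_cons => /orP [/eqP [E1 E2]|H1] /orP [/eqP [E3 E4]|H2]; subst => //.
- by move: Hn; rewrite (pairs_mem1 H2).
- by move: Hn; rewrite (pairs_mem1 H1).
- exact: IH.
Qed.

Lemma pairs_uniq2 (A : eqType) (p : seq A) u w1 w2 : uniq p ->
  (w1, u) \in pairs p -> (w2, u) \in pairs p -> w1 = w2.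
Proof.
elim: p => [|x0 p IH] //=; case: p IH => [|x1 p] IH //= /andP [Hn /[dup] Hu /andP [Hn1 _]].
rewrite !in_cons => /orP [/eqP [E1 E2]|H1] /orP [/eqP [E3 E4]|H2]; subst => //.
- by move: Hn1; rewrite (pairs_mem2 H2).
- by move: Hn1; rewrite (pairs_mem2 H1).
- exact: IH.
Qed.

Definition occ2 (V : finType) (w : seq (V * V * nat)) (v : V) (al be : nat) : Prop :=
  match w with
  | [::] => False
  | x0 :: w' =>
    [\/ v = trsrc x0 /\ al = trtime x0 /\ be = trtime x0,
        exists x y : V * V * nat, (x, y) \in pairs w /\ v = trdst x /\ al = trtime x /\ be = trtime y
      | v = trdst (last x0 w') /\ al = trtime (last x0 w') /\ be = trtime (last x0 w')]
  end.

Lemma occE (V : finType) w (v : V) al be : occupies w v al be <-> occ2 w v al be.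
Proof.
case: w => [|x0 w'] //=.
have L : nth x0 (x0 :: w') (size w') = last x0 w' by have := nth_last x0 (x0 :: w').
rewrite L; split; case=> [H|H|H].
- by constructor 1.
- constructor 2; case: H => [i [H1 [H2 [H3 H4]]]].
  exists (nth x0 (x0 :: w') i), (nth x0 (x0 :: w') i.+1); split => //.
  apply/(pairs_nth x0); by exists i.
- by constructor 3.
- by constructor 1.
- constructor 2; case: H => [x [y [/(pairs_nth x0) [i [H1 [H2 H3]]] [H4 [H5 H6]]]]].
  by exists i; subst.
- by constructor 3.
Qed.

Lemma shortcut_walk (V : finType) T (E : nat -> rel V) s z p1 p2 u v c d :
  is_twalk T E s z (p1 ++ (u, v, c) :: (v, u, d) :: p2) -> is_twalk T E s z (p1 ++ p2).
Proof.
case=> Hall Hw; split.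
  move=> x Hx; apply: Hall; move: Hx; rewrite !mem_cat !in_cons => /orP [->|->] //.
  by rewrite !orbT.
clear Hall; case: p1 Hw => [|x0 q1] /=.
  case=> [Hs Hz /andP [/andP [_ _] Hp]]; rewrite /trsrc /= in Hs.
  case: p2 Hz Hp => [|z0 q2] /=.
    by rewrite /trdst /= => <-.
  move=> Hz /andP [/andP [/eqP H1 H2] Hp]; split => //.
  by rewrite -H1 /trdst.
case=> [Hs Hz]; move=> Hp; move: Hp; rewrite (@cat_path _ (fun y y' : V*V*nat => (trdst y == trsrc y') && (trtime y < trtime y'))) => /andP [Hp1 /= /andP [/andP [/eqP H1 H2] /andP [/andP [_ H3] Hp2]]].
split => //.
  move: Hz; rewrite !last_cat /=.
  case: p2 Hp2 => [|z0 q2] /=.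
    by rewrite H1 /trdst /= => _ <-.
  by move=> _ ->.
rewrite (@cat_path _ (fun y y' : V*V*nat => (trdst y == trsrc y') && (trtime y < trtime y'))) Hp1 /=.
clear Hz; case: p2 Hp2 => [|z0 q2] /=; first by [].
move=> /andP [/andP [/eqP H4 H5] Hp2]; rewrite Hp2 andbT.
rewrite H1 -H4 /trdst /trsrc /= eqxx /=.
rewrite /trtime /= in H2 H3 H5 *; lia.
Qed.

Lemma pairs_in (A : eqType) (l1 l2 : seq A) x y : (x, y) \in pairs (l1 ++ x :: y :: l2).
Proof.
elim: l1 => [|z l1 IH] /=; first by rewrite in_cons eqxx.
case: l1 IH => [|z' l1] IH /=; rewrite in_cons; apply/orP; right => //.
Qed.

Lemma pairs_catl (A : eqType) (s1 s2 : seq A) x y : (x, y) \in pairs s1 -> (x, y) \in pairs (s1 ++ s2).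
Proof. by move/pairs_split => [l1 [l2 ->]]; rewrite -catA /= pairs_in. Qed.

Lemma pairs_catr (A : eqType) (s1 s2 : seq A) x y : (x, y) \in pairs s2 -> (x, y) \in pairs (s1 ++ s2).
Proof. by move/pairs_split => [l1 [l2 ->]]; rewrite catA pairs_in. Qed.

Lemma occ_shortcut (V : finType) (p1 p2 : seq (V * V * nat)) u v c d x al be :
  (forall y y', (y, y') \in pairs (p1 ++ (u, v, c) :: (v, u, d) :: p2) ->
      trdst y = trsrc y' /\ trtime y < trtime y') ->
  occ2 (p1 ++ p2) x al be ->
  (exists al' be', occ2 (p1 ++ (u, v, c) :: (v, u, d) :: p2) x al' be' /\ al' <= al /\ be <= be')
  \/ (x = u /\ occ2 (p1 ++ (u, v, c) :: (v, u, d) :: p2) u al c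
            /\ occ2 (p1 ++ (u, v, c) :: (v, u, d) :: p2) u d be).
Proof.
move=> Hr.
have Hin : forall w l1 l2 (y y' : V * V * nat), w = l1 ++ y :: y' :: l2 -> (y, y') \in pairs w.
  by move=> w l1 l2 y y' ->; exact: pairs_in.
case: p1 Hr => [|a q]; case: p2 => [|b q'] /= Hr //.
-
  have HYb : ((v, u, d), b) \in pairs [:: (u, v, c), (v, u, d), b & q'] by apply: (Hin _ [:: (u, v, c)] q').
  have [Hl1 Hl2] := Hr _ _ HYb; rewrite /trdst /trtime /= in Hl1 Hl2.
  case=> [[-> [-> ->]]|[y [y' [Hp H]]]|H].
  + left; exists d, (trtime b); split; last by split => //; rewrite /trtime /= in Hl2 *; lia.
    rewrite /=; constructor 2; exists (v, u, d), b; split => //.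
  + left; exists al, be; split => //; rewrite /=; constructor 2; exists y, y'; split => //.
    by apply: (@pairs_catr _ [:: (u, v, c); (v, u, d)]).
  + by left; exists al, be; split => //; rewrite /=; constructor 3.
-
  rewrite cats0.
  have HlX : (last a q, (u, v, c)) \in pairs (a :: q ++ [:: (u, v, c); (v, u, d)]) by rewrite pairs_cat mem_cat in_cons eqxx orbT.
  have [Hl1 Hl2] := Hr _ _ HlX; rewrite /trsrc /trtime /= in Hl1 Hl2.
  case=> [H|[y [y' [Hp H]]]|[-> [-> ->]]].
  + by left; exists al, be; split => //; rewrite /=; constructor 1.
  + left; exists al, be; split => //; rewrite /=; constructor 2; exists y, y'; split => //.
    by rewrite -cat_cons; apply: pairs_catl.
  + left; exists (trtime (last a q)), c; split; last by split => //; rewrite /trtime /= in Hl2 *; lia.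
    rewrite /=; constructor 2; exists (last a q), (u, v, c); split => //.
-
  have HlX : (last a q, (u, v, c)) \in pairs (a :: q ++ [:: (u, v, c), (v, u, d), b & q']) by rewrite pairs_cat mem_cat in_cons eqxx orbT.
  have HYb : ((v, u, d), b) \in pairs (a :: q ++ [:: (u, v, c), (v, u, d), b & q']).
    by apply: (Hin _ (a :: q ++ [:: (u, v, c)]) q'); rewrite /= -catA.
  have [Hl1 Hl2] := Hr _ _ HlX; rewrite /trsrc /trtime /= in Hl1 Hl2.
  have [Hb1 Hb2] := Hr _ _ HYb; rewrite /trdst /trtime /= in Hb1 Hb2.
  case=> [H|[y [y' [Hp H]]]|H].
  + by left; exists al, be; split => //; rewrite /=; constructor 1.
  + move: Hp; rewrite pairs_cat mem_cat in_cons => /or3P [Hp|/eqP [E1 E2]|Hp].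
    * left; exists al, be; split => //; rewrite /=; constructor 2; exists y, y'; split => //.
      by rewrite -cat_cons; apply: pairs_catl.
    * subst y y'; case: H => [-> [-> ->]]; right; split => //; split.
        by rewrite /=; constructor 2; exists (last a q), (u, v, c).
      by rewrite /=; constructor 2; exists (v, u, d), b.
    * left; exists al, be; split => //; rewrite /=; constructor 2; exists y, y'; split => //.
      by have := @pairs_catr _ (a :: q ++ [:: (u, v, c); (v, u, d)]) _ _ _ Hp; rewrite /= -catA.
  + left; exists al, be; split => //; rewrite /=; constructor 3.
    by move: H; rewrite !last_cat.
Qed.

Lemma tdisj_sym (V : Type) (w1 w2 : seq (V * V * nat)) : tdisjoint w1 w2 -> tdisjoint w2 w1.
Proof.
move=> H [x [a [b [c [d [O1 O2 H1 H2]]]]]]; apply: H.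
by exists x, c, d, a, b; split.
Qed.

Lemma walk_pairs (V : finType) T (E : nat -> rel V) s z w (x y : V * V * nat) :
  is_twalk T E s z w -> (x, y) \in pairs w -> trdst x = trsrc y /\ trtime x < trtime y.
Proof.
case: w => [|x0 w'] [_ Hw] //; case: Hw => _ _ Hp Hxy.
by have /andP [/eqP -> ->] := path_pairs Hp Hxy.
Qed.

Lemma step (V : finType) (T : nat) (E : nat -> rel V) (n : nat)
  (S : 'I_n -> V * V) (sol : 'I_n -> seq (V * V * nat)) :
  is_solution T E S sol ->
  (forall sol', is_solution T E S sol' ->
     \sum_(i < n) size (sol i) <= \sum_(i < n) size (sol' i)) ->
  forall k p1 p2 u v c d, sol k = p1 ++ (u, v, c) :: (v, u, d) :: p2 ->
  exists j, j != k /\ exists g h, [/\ c < g, h < d & occ2 (sol j) u g h].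
Proof.
move=> [Hwalk Hdis] Hmin k p1 p2 u v c d Hk.
apply: NNPP => Hno.
pose sol' := fun l => if l == k then p1 ++ p2 else sol l.
have Hr : forall y y', (y, y') \in pairs (p1 ++ (u, v, c) :: (v, u, d) :: p2) ->
      trdst y = trsrc y' /\ trtime y < trtime y'.
  by move=> y y'; rewrite -Hk; apply: walk_pairs (Hwalk k).
have Hkey : forall l, l != k -> tdisjoint (p1 ++ p2) (sol l).
  move=> l Hl [x [al [be [g [h [/occE O1 O2 H1 H2]]]]]].
  case: (occ_shortcut Hr O1) => [[al' [be' [O3 [H3 H4]]]]|[Hx [O3 O4]]].
    apply: (Hdis k l); first by rewrite eq_sym.
    exists x, al', be', g, h; split => //; first by apply/occE; rewrite Hk.
    exact: leq_trans H3 H1. exact: leq_trans H2 H4.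
  subst x.
  have N1 := Hdis k l; have N2 := N1; rewrite eq_sym in N1 N2.
  have {}N1 := N1 Hl; have {}N2 := N2 Hl.
  have Hg : c < g.
    case: (leqP g c) => // Hgc; exfalso; apply: N1.
    by exists u, al, c, g, h; split => //; apply/occE; rewrite Hk.
  have Hh : h < d.
    case: (leqP d h) => // Hdh; exfalso; apply: N2.
    by exists u, d, be, g, h; split => //; apply/occE; rewrite Hk.
  apply: Hno; exists l; split => //; exists g, h; split => //.
  exact/occE.
have Hsol' : is_solution T E S sol'.
  split.
    move=> l; rewrite /sol'; case: eqP => [->|_] //.
    by have := Hwalk k; rewrite Hk; exact: shortcut_walk.
  move=> l1 l2 Hl; rewrite /sol'.
  case: eqP => [E1|N1]; case: eqP => [E2|N2].
  - by move: Hl; rewrite E1 E2 eqxx.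
  - by apply: Hkey; apply/eqP.
  - by apply: tdisj_sym; apply: Hkey; apply/eqP.
  - exact: Hdis.
have := Hmin _ Hsol'.
rewrite (bigD1 k) //= [X in _ <= X](bigD1 k) //= /sol' eqxx Hk !size_cat /=.
rewrite [X in _ <= _ + X](eq_bigr (fun i => size (sol i))); last by move=> i /negbTE ->.
lia.
Qed.

Lemma line_nbr (V : finType) T (E : nat -> rel V) u v x y :
  temporal_line T E -> ug_edge T E u v -> ug_edge T E u x -> ug_edge T E u y ->
  x != v -> y != v -> x = y.
Proof.
case=> _ [p [Hu _ Hadj]]; rewrite !Hadj -!/(pairs p).
move=> /orP [Hv|Hv] /orP [Hx|Hx] /orP [Hy|Hy] Nx Ny.
all: first [ exact: (pairs_uniq1 Hu Hx Hy) | exact: (pairs_uniq2 Hu Hx Hy) | idtac ].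
- by move: Nx; rewrite (pairs_uniq1 Hu Hx Hv) eqxx.
- by move: Ny; rewrite (pairs_uniq1 Hu Hy Hv) eqxx.
- by move: Ny; rewrite (pairs_uniq2 Hu Hy Hv) eqxx.
- by move: Nx; rewrite (pairs_uniq2 Hu Hx Hv) eqxx.
Qed.

Lemma edge_of (V : finType) T (E : nat -> rel V) t a b :
  temporal_line T E -> 1 <= t <= T -> E t a b -> ug_edge T E a b /\ ug_edge T E b a.
Proof.
case=> [Hg _] Ht Hab; have [_ Hs] := Hg t Ht.
have Hm : t \in iota 1 T by rewrite mem_iota; lia.
split; apply/hasP; exists t => //; by rewrite Hs.
Qed.

Lemma dist_ext (V : finType) T (E : nat -> rel V) a u w m :
  ug_dist_le T E a u m -> ug_edge T E u w -> ug_dist_le T E a w m.+1.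
Proof.
case=> p [Hs Hp Hl] Huw; exists (rcons p w); split.
- by rewrite size_rcons.
- by rewrite rcons_path Hp Hl.
- by rewrite last_rcons.
Qed.

Lemma dist_mono (V : finType) T (E : nat -> rel V) a u m m' :
  ug_dist_le T E a u m -> m <= m' -> ug_dist_le T E a u m'.
Proof. case=> p [Hs Hp Hl] Hm; exists p; split => //; exact: leq_trans Hm. Qed.

Lemma walk_sorted (V : finType) T (E : nat -> rel V) s z w :
  is_twalk T E s z w -> sorted (fun x y : V * V * nat => trtime x < trtime y) w.
Proof.
case: w => [|x0 w'] [_ H] //; case: H => _ _ Hp.
by apply: sub_path Hp => x y /andP [].
Qed.

Lemma walk_split_time (V : finType) T (E : nat -> rel V) s z p1 p2 X Y (x : V * V * nat) :
  is_twalk T E s z (p1 ++ X :: Y :: p2) -> x \in p1 ++ X :: Y :: p2 ->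
  trtime x <= trtime X \/ trtime Y <= trtime x.
Proof.
move/walk_sorted; rewrite sorted_pairwise; last by move=> y x' z' H1 H2; exact: ltn_trans H1 H2.
rewrite pairwise_cat => /and3P [Hall _ Hpw2].
rewrite mem_cat => /orP [Hx|].
  left; apply: ltnW; move/allrelP: Hall; apply => //; exact: mem_head.
move: Hpw2 => /= /andP [_ /andP [HY _]].
rewrite !in_cons => /orP [/eqP ->|/orP [/eqP ->|Hx]]; [by left|by right|].
by right; apply: ltnW; move/allP: HY; apply.
Qed.

Lemma occ2_pair (V : finType) (w : seq (V * V * nat)) x y :
  (x, y) \in pairs w -> occ2 w (trdst x) (trtime x) (trtime y).
Proof. by case: w => [|x0 w'] // H; constructor 2; exists x, y. Qed.

Lemma nb (a b x : nat) : ~~ (a <= x <= b) -> a <= x -> x <= b -> False.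
Proof. by move=> /negP H H1 H2; apply: H; rewrite H1 H2. Qed.

Definition Goal (V : finType) (T : nat) (E : nat -> rel V) (n : nat)
  (S : 'I_n -> V * V) (sol : 'I_n -> seq (V * V * nat)) i a t t' :=
    exists j : 'I_n, j != i /\
      exists (a' : V) (t'' : nat),
        [/\ t < t'' < t',
            ((S j).1, a', t'') \in sol j \/ (a', (S j).2, t'') \in sol j
          & ug_dist_le T E a a' n].

Lemma round (V : finType) (T : nat) (E : nat -> rel V) (n : nat)
  (S : 'I_n -> V * V) (sol : 'I_n -> seq (V * V * nat)) :
  temporal_line T E ->
  is_solution T E S sol ->
  (forall sol', is_solution T E S sol' ->
     \sum_(i < n) size (sol i) <= \sum_(i < n) size (sol' i)) ->
  forall (i : 'I_n) (a : V) (t t' : nat) (K : {set 'I_n}) k p1 p2 u v c d,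
  k \notin K -> i \in k |: K ->
  (forall l, l \in K -> forall x : V * V * nat, x \in sol l -> ~~ (c <= trtime x <= d)) ->
  t <= c -> d <= t' ->
  sol k = p1 ++ (u, v, c) :: (v, u, d) :: p2 ->
  ug_dist_le T E a u #|K| ->
  Goal T E S sol i a t t' \/
  exists j x1 l1 l2 g h,
    [/\ j \notin k |: K /\ i \in j |: (k |: K),
        (forall l, l \in k |: K -> forall x : V * V * nat, x \in sol l -> ~~ (g <= trtime x <= h)),
        t <= g /\ h <= t',
        sol j = l1 ++ (x1, u, g) :: (u, x1, h) :: l2
      & ug_dist_le T E a x1 #|k |: K|].
Proof.
move=> Hline Hsol Hmin i a t t' K k p1 p2 u v c d HkK HiK HK Htc Hdt Hk Hd.
have [Hwalk Hdis] := Hsol.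
have [j [Hjk [g [h [Hcg Hhd Oj]]]]] := step Hsol Hmin Hk.
have notK : forall x : V * V * nat, x \in sol j -> c < trtime x < d -> j \notin K.
  move=> x Hx /andP [H1 H2]; apply/negP => HjK; apply: (nb (HK j HjK x Hx)); timeout 20 lia.
have Hcard0 : forall A : {set 'I_n}, #|A| <= n by move=> A; have := max_card A; rewrite card_ord.
have fin : j \notin K -> 
   forall a' t'', t < t'' < t' -> ((S j).1, a', t'') \in sol j \/ (a', (S j).2, t'') \in sol j ->
   ug_edge T E u a' -> Goal T E S sol i a t t'.
  move=> HjK a' t'' Ht Hin Hua; exists j.
  have HjK' : j \notin k |: K by rewrite in_setU1 negb_or Hjk HjK.
  split.
    by apply/eqP => Eji; move: HjK'; rewrite Eji HiK.
  exists a', t''; split => //.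
  apply: dist_mono (dist_ext Hd Hua) _.
  have := Hcard0 (j |: (k |: K)); rewrite !cardsU1 (negbTE HjK') (negbTE HkK) /=; timeout 20 lia.
have [Hall Hw] := Hwalk j.
move: Oj Hall Hw notK fin; case Ej: (sol j) => [|x0 w'] //= Oj Hall Hw notK fin.
case: Hw => Hs Hz Hp.
case: Oj => [[Hu [Hg Hh]]|[x [y [Hxy [Hu [Hg Hh]]]]]|[Hu [Hg Hh]]].
-
  have Hx0 : x0 \in x0 :: w' by rewrite mem_head.
  have [Ht0 HE0] := Hall x0 Hx0.
  left; apply: (fin _ (trdst x0) g).
  + by apply: (notK x0) => //; timeout 20 lia.
  + timeout 20 lia.
  + left; rewrite -Hs Hg.
    have E0 : (trsrc x0, trdst x0, trtime x0) = x0 by case: (x0) => [[]].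
    by rewrite E0.
  + by rewrite Hu; case: (edge_of Hline Ht0 HE0).
-
  have [Hl1 Hl2] := walk_pairs (Hwalk j) (eq_ind_r (fun w => (x, y) \in pairs w) Hxy Ej).
  have Hxm : x \in x0 :: w' by exact: pairs_mem1 Hxy.
  have Hym : y \in x0 :: w' by rewrite in_cons (pairs_mem2 Hxy) orbT.
  have HjK : j \notin K.
    apply: (notK x) => //; timeout 20 lia.
  have [al [Hal Oal]] : exists al, al <= g /\ occ2 (x0 :: w') (trsrc x) al g.
    case: (@pmem_prev _ _ _ _ Hxm) => [Ex|[x' Hx'x]].
      by exists g; split => //; constructor 1; rewrite -Ex.
    have [E1 E2] := walk_pairs (Hwalk j) (eq_ind_r (fun w => (x', x) \in pairs w) Hx'x Ej).
    exists (@trtime V x'); split; first by timeout 20 lia.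
    by rewrite -E1 Hg; apply: occ2_pair.
  have [be [Hbe Obe]] : exists be, h <= be /\ occ2 (x0 :: w') (trdst y) h be.
    case: (@pmem_next _ _ _ _ Hym) => [Ey|[y' Hyy']].
      by exists h; split => //; constructor 3; rewrite -Ey.
    have [E1 E2] := walk_pairs (Hwalk j) (eq_ind_r (fun w => (y, y') \in pairs w) Hyy' Ej).
    exists (@trtime V y'); split; first by timeout 20 lia.
    by rewrite Hh; apply: occ2_pair.
  have Okv : occ2 (sol k) v c d.
    by rewrite Hk; apply: (occ2_pair (x := (u, v, c)) (y := (v, u, d))); apply: pairs_in.
  have Nx : trsrc x != v.
    apply/eqP => Ex; apply: (Hdis j k Hjk); exists v, al, g, c, d; split.
    - by apply/occE; rewrite Ej -Ex.
    - exact/occE.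
    - timeout 20 lia.
    - timeout 20 lia.
  have Ny : trdst y != v.
    apply/eqP => Ey; apply: (Hdis j k Hjk); exists v, h, be, c, d; split.
    - by apply/occE; rewrite Ej -Ey.
    - exact/occE.
    - timeout 20 lia.
    - timeout 20 lia.
  have [Htx HEx] := Hall x Hxm.
  have [Hty HEy] := Hall y Hym.
  have HXk : (u, v, c) \in sol k by rewrite Hk mem_cat in_cons eqxx orbT.
  have [HtX HEX] := (proj1 (Hwalk k)) _ HXk.
  have [Euv _] := edge_of Hline HtX HEX.
  have [_ Eux] := edge_of Hline Htx HEx.
  have [Euy _] := edge_of Hline Hty HEy.
  rewrite -Hu in Eux; rewrite -Hl1 -Hu in Euy.
  have Exy := line_nbr Hline Euv Eux Euy Nx Ny.
  have [l1 [l2 Hsplit]] := pairs_split Hxy.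
  right; exists j, (trsrc x), l1, l2, g, h; split.
  + by rewrite in_setU1 negb_or Hjk HjK; rewrite !in_setU1 in HiK *; rewrite HiK orbT.
  + move=> l; rewrite in_setU1 => /orP [/eqP ->|HlK] z Hzz.
      have Wk := Hwalk k; rewrite Hk in Wk Hzz.
      have := walk_split_time Wk Hzz.
      by case => /= H; apply/negP => /andP [H1 H2]; clear -H H1 H2 Hcg Hhd; timeout 20 lia.
    apply/negP => /andP [H1 H2]; apply: (nb (HK l HlK z Hzz)); clear -H1 H2 Hcg Hhd; timeout 20 lia.
  + by clear -Htc Hcg Hhd Hdt; split; lia.
  + rewrite Ej Hsplit; congr (_ ++ _ :: _ :: _).
      by rewrite Hu Hg; case: (x) => [[]].
    by rewrite Exy Hh Hu Hl1; case: (y) => [[]].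
  + by rewrite cardsU1 HkK; apply: dist_ext Hd Eux.
-
  have Hlm : last x0 w' \in x0 :: w' by exact: mem_last.
  have [Htl HEl] := Hall _ Hlm.
  left; apply: (fin _ (trsrc (last x0 w')) g).
  + by apply: (notK (last x0 w')) => //; timeout 20 lia.
  + timeout 20 lia.
  + right; rewrite -Hz Hg.
    have E0 : (trsrc (last x0 w'), trdst (last x0 w'), trtime (last x0 w')) = last x0 w' by case: (last x0 w') => [[]].
    by rewrite E0.
  + by rewrite Hu; case: (edge_of Hline Htl HEl).
Qed.

Lemma chain (V : finType) (T : nat) (E : nat -> rel V) (n : nat)
  (S : 'I_n -> V * V) (sol : 'I_n -> seq (V * V * nat)) :
  temporal_line T E ->
  is_solution T E S sol ->
  (forall sol', is_solution T E S sol' ->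
     \sum_(i < n) size (sol i) <= \sum_(i < n) size (sol' i)) ->
  forall (i : 'I_n) (a : V) (t t' : nat) N (K : {set 'I_n}) k p1 p2 u v c d,
  n - #|K| <= N ->
  k \notin K -> i \in k |: K ->
  (forall l, l \in K -> forall x : V * V * nat, x \in sol l -> ~~ (c <= trtime x <= d)) ->
  t <= c -> d <= t' ->
  sol k = p1 ++ (u, v, c) :: (v, u, d) :: p2 ->
  ug_dist_le T E a u #|K| ->
  Goal T E S sol i a t t'.
Proof.
move=> Hline Hsol Hmin i a t t'.
elim=> [|N IH] K k p1 p2 u v c d HN HkK HiK HK Htc Hdt Hk Hd.
  exfalso; have := max_card (k |: K); rewrite card_ord cardsU1 HkK; clear -HN; lia.
case: (round Hline Hsol Hmin HkK HiK HK Htc Hdt Hk Hd) => [//|].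
move=> [j [x1 [l1 [l2 [g [h [[Hj Hi] HK' [Htg Hht] Hj' Hd']]]]]]].
apply: (IH (k |: K) j l1 l2 x1 u g h) => //.
rewrite cardsU1 HkK; clear -HN; lia.
Qed.

Theorem mainTheorem7 (V : finType) (T : nat) (E : nat -> rel V) (n : nat)
  (S : 'I_n -> V * V) (sol : 'I_n -> seq (V * V * nat)) :
  temporal_line T E ->
  is_solution T E S sol ->
  (forall sol', is_solution T E S sol' ->
     \sum_(i < n) size (sol i) <= \sum_(i < n) size (sol' i)) ->
  forall (i : 'I_n) (w1 w2 : seq (V * V * nat)) (a b : V) (t t' : nat),
    sol i = w1 ++ [:: (a, b, t); (b, a, t')] ++ w2 ->
    t < t' ->
    exists j : 'I_n, j != i /\
      exists (a' : V) (t'' : nat),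
        [/\ t < t'' < t',
            ((S j).1, a', t'') \in sol j \/ (a', (S j).2, t'') \in sol j
          & ug_dist_le T E a a' n].
Proof.
move=> Hline Hsol Hmin i w1 w2 a b t t' Hi Htt.
apply: (chain Hline Hsol Hmin (N := n) (K := set0) (k := i) (p1 := w1) (p2 := w2) (u := a) (v := b) (c := t) (d := t')) => //.
- exact: leq_subr.
- by rewrite in_set0.
- by rewrite setU11.
- by move=> l; rewrite in_set0.
- rewrite cards0; by exists [::].
Qed.
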